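(* For finite-dimensional $\mathcal H_X,\mathcal H_Y,\mathcal H_A,\mathcal H_B$, the set $\mathrm{LOCC}^*$ of maps from $\mathbf L(\mathcal H_X\otimes\mathcal H_Y)$ to $\mathbf L(\mathcal H_A\otimes\mathcal H_B)$ coincides with the set $\mathrm{SEP}$ of bipartite separable operations.
   Context: A quantum instrument with classical input $i$ is a family $\{\mathcal A_{o|i}\}_o$ (finite index sets) of completely positive linear maps with $\sum_o\mathcal A_{o|i}$ trace preserving for each $i$. $\mathrm{LOCC}^*$ is the set of completely positive trace preserving (CPTP) maps of the form $\mathcal M=\sum_{i_A,i_B,o_A,o_B}p(i_A,i_B|o_A,o_B)\,\mathcal A_{o_A|i_A}\otimes\mathcal B_{o_B|i_B}$, where $\{\mathcal A_{o_A|i_A}\}_{o_A}$ are instruments $\mathbf L(\mathcal H_X)\to\mathbf L(\mathcal H_A)$, $\{\mathcal B_{o_B|i_B}\}_{o_B}$ are instruments $\mathbf L(\mathcal H_Y)\to\mathbf L(\mathcal H_B)$, and $p(i_A,i_B|o_A,o_B)\ge0$ with $\sum_{i_A,i_B}p(i_A,i_B|o_A,o_B)=1$ for all $o_A,o_B$. $\mathrm{SEP}$ is the set of CPTP maps of the form $\sum_{k=1}^L\mathcal E^A_k\otimes\mathcal E^B_k$ with completely positive maps $\mathcal E^A_k:\mathbf L(\mathcal H_X)\to\mathbf L(\mathcal H_A)$, $\mathcal E^B_k:\mathbf L(\mathcal H_Y)\to\mathbf L(\mathcal H_B)$ (equivalently, CPTP maps with Kraus operators of product form $E_k\otimes F_k$).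 *)

(* Defs.v *)
From HB Require Import structures.
From mathcomp Require Import all_boot all_order all_algebra.
From mathcomp Require Export mxtens.
Set Implicit Arguments.
Unset Strict Implicit.
Unset Printing Implicit Defensive.
Import Order.TTheory GRing.Theory Num.Theory.
Local Open Scope ring_scope.

Section Quantum.
Variable C : numClosedFieldType.

Definition psd (n : nat) (A : 'M[C]_n) : Prop :=
  forall v : 'cV[C]_n, 0 <= ((map_mx Num.conj v)^T *m A *m v) 0 0.

(* The bipartite space C^m (x) C^n is C^(m*n) with the Kronecker indexing of
   mxtens (index (i,k) |-> i*n + k). *)
Definition tensmap (x y a b : nat) (E : 'M[C]_x -> 'M[C]_a)
  (F : 'M[C]_y -> 'M[C]_b) (M : 'M[C]_(x * y)) : 'M[C]_(a * b) :=
  \sum_(i < x) \sum_(j < x) \sum_(k < y) \sum_(l < y)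
     M (mxtens_index (i, k)) (mxtens_index (j, l))
       *: (E (delta_mx i j) *t F (delta_mx k l)).

Definition CP (x a : nat) (E : 'M[C]_x -> 'M[C]_a) : Prop :=
  linear E /\
  forall (k : nat) (M : 'M[C]_(k * x)),
    psd M -> psd (tensmap (fun N : 'M[C]_k => N) E M).

Definition TP (x a : nat) (E : 'M[C]_x -> 'M[C]_a) : Prop :=
  forall M : 'M[C]_x, \tr (E M) = \tr M.

Definition CPTP (x a : nat) (E : 'M[C]_x -> 'M[C]_a) : Prop := CP E /\ TP E.

Definition instruments (x a nI nO : nat)
  (A : 'I_nI -> 'I_nO -> 'M[C]_x -> 'M[C]_a) : Prop :=
  (forall i o, CP (A i o)) /\
  (forall i, TP (fun M => \sum_(o < nO) A i o M)).

Definition LOCCstar (x y a b : nat) (M : 'M[C]_(x * y) -> 'M[C]_(a * b)) : Prop :=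
  CPTP M /\
  exists (nIA nOA nIB nOB : nat)
         (A : 'I_nIA -> 'I_nOA -> 'M[C]_x -> 'M[C]_a)
         (B : 'I_nIB -> 'I_nOB -> 'M[C]_y -> 'M[C]_b)
         (p : 'I_nIA -> 'I_nIB -> 'I_nOA -> 'I_nOB -> C),
    instruments A /\ instruments B /\
    (forall iA iB oA oB, 0 <= p iA iB oA oB) /\
    (forall oA oB, \sum_(iA < nIA) \sum_(iB < nIB) p iA iB oA oB = 1) /\
    (forall X : 'M[C]_(x * y),
       M X = \sum_(iA < nIA) \sum_(iB < nIB) \sum_(oA < nOA) \sum_(oB < nOB)
               p iA iB oA oB *: tensmap (A iA oA) (B iB oB) X).

Definition SEP (x y a b : nat) (M : 'M[C]_(x * y) -> 'M[C]_(a * b)) : Prop :=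
  CPTP M /\
  exists (L : nat) (EA : 'I_L -> 'M[C]_x -> 'M[C]_a)
         (EB : 'I_L -> 'M[C]_y -> 'M[C]_b),
    (forall k, CP (EA k)) /\ (forall k, CP (EB k)) /\
    (forall X : 'M[C]_(x * y), M X = \sum_(k < L) tensmap (EA k) (EB k) X).

End Quantum.

(* Main.v *)
Require Import Defs.
From mathcomp Require Import all_boot all_order all_algebra.
From mathcomp Require Import ring.
From Stdlib Require Import FunctionalExtensionality.
Set Implicit Arguments.
Unset Strict Implicit.
Unset Printing Implicit Defensive.
Import Order.TTheory GRing.Theory Num.Theory.
Local Open Scope ring_scope.

Lemma sum_enum (V : nmodType) (T : finType) (F : T -> V) :
  \sum_(i < #|T|) F (enum_val i) = \sum_t F t.
Proof. by rewrite -big_enum_val. Qed.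

Lemma sum_tens (V : nmodType) m n (F : 'I_(m * n) -> V) :
  \sum_(p < m * n) F p = \sum_(i < m) \sum_(j < n) F (mxtens_index (i, j)).
Proof.
rewrite (pair_big (fun _ => true) (fun _ => true) (fun i j => F (mxtens_index (i, j)))) /=.
rewrite (reindex (@mxtens_unindex m n)) /=.
  by apply: eq_bigr => k _; rewrite mxtens_unindexK.
by exists (@mxtens_index m n) => k _; rewrite (mxtens_indexK, mxtens_unindexK).
Qed.

Lemma sum_ind (V : nmodType) (T : finType) (t : T) (F : T -> V) :
  \sum_i (if i == t then F i else 0) = F t.
Proof. by rewrite -big_mkcond big_pred1_eq. Qed.

Section S.
Variable C : numClosedFieldType.
Implicit Types (c : C).

Lemma tensZl m n p q c (A : 'M[C]_(m, n)) (B : 'M[C]_(p, q)) :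
  (c *: A) *t B = c *: (A *t B).
Proof. by apply/matrixP => i j; rewrite !mxE mulrA. Qed.
Lemma tensZr m n p q c (A : 'M[C]_(m, n)) (B : 'M[C]_(p, q)) :
  A *t (c *: B) = c *: (A *t B).
Proof. by apply/matrixP => i j; rewrite !mxE mulrCA. Qed.
Lemma tensDr m n p q (A : 'M[C]_(m, n)) (B B' : 'M[C]_(p, q)) :
  A *t (B + B') = A *t B + A *t B'.
Proof. by apply/matrixP => i j; rewrite !mxE mulrDr. Qed.
Lemma tenssumr m n p q (I : finType) (A : 'M[C]_(m, n)) (B : I -> 'M[C]_(p, q)) :
  A *t (\sum_r B r) = \sum_r A *t B r.
Proof.
apply/matrixP => i j; rewrite !mxE summxE mulr_sumr summxE.
by apply: eq_bigr => r _; rewrite !mxE.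
Qed.
Lemma tens0r m n p q (A : 'M[C]_(m, n)) : A *t (0 : 'M[C]_(p, q)) = 0.
Proof. by apply/matrixP => i j; rewrite !mxE mulr0. Qed.
Lemma tens0l m n p q (B : 'M[C]_(p, q)) : (0 : 'M[C]_(m, n)) *t B = 0.
Proof. by apply/matrixP => i j; rewrite !mxE mul0r. Qed.

Lemma tr_tens m n (A : 'M[C]_m) (B : 'M[C]_n) : \tr (A *t B) = \tr A * \tr B.
Proof.
rewrite /mxtrace mulr_sum; apply: eq_bigr => i _; by rewrite mxE.
Qed.


Section TM.
Variables (x y a b : nat).
Implicit Types (E : 'M[C]_x -> 'M[C]_a) (F : 'M[C]_y -> 'M[C]_b) (M : 'M[C]_(x * y)).

Lemma tensmap_Zl c E F M :
  tensmap (fun X => c *: E X) F M = c *: tensmap E F M.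
Proof.
rewrite /tensmap !scaler_sumr; apply: eq_bigr => i _; rewrite !scaler_sumr.
apply: eq_bigr => j _; rewrite !scaler_sumr; apply: eq_bigr => k _.
rewrite !scaler_sumr; apply: eq_bigr => l _.
by rewrite tensZl !scalerA mulrC.
Qed.

Lemma tensmap_Zr c E F M :
  tensmap E (fun X => c *: F X) M = c *: tensmap E F M.
Proof.
rewrite /tensmap !scaler_sumr; apply: eq_bigr => i _; rewrite !scaler_sumr.
apply: eq_bigr => j _; rewrite !scaler_sumr; apply: eq_bigr => k _.
rewrite !scaler_sumr; apply: eq_bigr => l _.
by rewrite tensZr !scalerA mulrC.
Qed.

Lemma tensmap_0l F M : tensmap (fun _ : 'M[C]_x => (0 : 'M[C]_a)) F M = 0.
Proof.
rewrite /tensmap big1 // => i _; rewrite big1 // => j _; rewrite big1 // => k _.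
by rewrite big1 // => l _; rewrite tens0l scaler0.
Qed.

Lemma tensmap_0r E M : tensmap E (fun _ : 'M[C]_y => (0 : 'M[C]_b)) M = 0.
Proof.
rewrite /tensmap big1 // => i _; rewrite big1 // => j _; rewrite big1 // => k _.
by rewrite big1 // => l _; rewrite tens0r scaler0.
Qed.

Lemma tensmap_sumr (I : finType) E (F : I -> 'M[C]_y -> 'M[C]_b) M :
  tensmap E (fun X => \sum_r F r X) M = \sum_r tensmap E (F r) M.
Proof.
rewrite /tensmap; symmetry; rewrite exchange_big; apply: eq_bigr => i _.
rewrite exchange_big; apply: eq_bigr => j _.
rewrite exchange_big; apply: eq_bigr => k _.
rewrite exchange_big; apply: eq_bigr => l _.
by rewrite tenssumr scaler_sumr.
Qed.

Lemma tensmap_Dr E F F' M :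
  tensmap E (fun X => F X + F' X) M = tensmap E F M + tensmap E F' M.
Proof.
rewrite /tensmap -!big_split; apply: eq_bigr => i _.
rewrite -!big_split; apply: eq_bigr => j _.
rewrite -!big_split; apply: eq_bigr => k _.
rewrite -!big_split; apply: eq_bigr => l _.
by rewrite tensDr scalerDr.
Qed.

Lemma tensmap_delta E F i j :
  tensmap E F (delta_mx (mxtens_index (i, j)) (mxtens_index (i, j))) =
  E (delta_mx i i) *t F (delta_mx j j).
Proof.
have mI := inj_eq (can_inj (@mxtens_indexK _ _)).
rewrite /tensmap (bigD1 i) //= [X in _ + X]big1 ?addr0; last first.
  move=> i' ni; rewrite big1 // => j' _; rewrite big1 // => k _; rewrite big1 // => l _.
  by rewrite mxE !mI /= !xpair_eqE (negbTE ni) /= scale0r.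
rewrite (bigD1 i) //= [X in _ + X]big1 ?addr0; last first.
  move=> i' ni; rewrite big1 // => k _; rewrite big1 // => l _.
  by rewrite mxE !mI /= !xpair_eqE (negbTE ni) /= andbF scale0r.
rewrite (bigD1 j) //= [X in _ + X]big1 ?addr0; last first.
  move=> k nk; rewrite big1 // => l _.
  by rewrite mxE !mI /= !xpair_eqE (negbTE nk) /= andbF scale0r.
rewrite (bigD1 j) //= [X in _ + X]big1 ?addr0; last first.
  move=> l nl.
  by rewrite mxE !mI /= !xpair_eqE (negbTE nl) /= !andbF scale0r.
by rewrite mxE !eqxx scale1r.
Qed.

End TM.

Definition qf n (v : 'cV[C]_n) (A : 'M[C]_n) := ((map_mx Num.conj v)^T *m A *m v) 0 0.

Lemma qfE n (v : 'cV[C]_n) A :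
  qf v A = \sum_p \sum_q (v p 0)^* * A p q * v q 0.
Proof.
rewrite /qf mxE exchange_big; apply: eq_bigr => q _; rewrite mxE mulr_suml.
by apply: eq_bigr => p _; rewrite !mxE.
Qed.

Lemma psdE n (A : 'M[C]_n) : psd A <-> forall v, 0 <= qf v A.
Proof. by []. Qed.

Lemma qfD n (v : 'cV[C]_n) A B : qf v (A + B) = qf v A + qf v B.
Proof. by rewrite /qf mulmxDr mulmxDl mxE. Qed.
Lemma qfZ n (v : 'cV[C]_n) c A : qf v (c *: A) = c * qf v A.
Proof. by rewrite /qf -scalemxAr -scalemxAl mxE. Qed.
Lemma qf0 n (v : 'cV[C]_n) : qf v 0 = 0.
Proof. by rewrite /qf mulmx0 mul0mx mxE. Qed.
Lemma qf_sum n (v : 'cV[C]_n) (I : finType) (A : I -> 'M[C]_n) :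
  qf v (\sum_r A r) = \sum_r qf v (A r).
Proof.
apply: (big_ind2 (fun a b => qf v a = b)); first exact: qf0.
  by move=> ? ? ? ? <- <-; rewrite qfD.
by [].
Qed.

Lemma psd_add n (A B : 'M[C]_n) : psd A -> psd B -> psd (A + B).
Proof. by move=> hA hB v; change (0 <= qf v (A + B)); rewrite qfD addr_ge0 //; [apply: hA|apply: hB]. Qed.
Lemma psd_scale n c (A : 'M[C]_n) : 0 <= c -> psd A -> psd (c *: A).
Proof. by move=> hc hA v; change (0 <= qf v (c *: A)); rewrite qfZ mulr_ge0 //; apply: hA. Qed.
Lemma psd0 n : psd (0 : 'M[C]_n).
Proof. by move=> v; change (0 <= qf v 0); rewrite qf0. Qed.
Lemma psd_sum n (I : finType) (A : I -> 'M[C]_n) :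
  (forall r, psd (A r)) -> psd (\sum_r A r).
Proof.
move=> h; apply: (big_ind (fun B : 'M[C]_n => psd B)); [exact: psd0 | exact: psd_add | by []].
Qed.

Section Lin.
Variables (m n : nat) (E : 'M[C]_m -> 'M[C]_n).
Hypothesis hE : linear E.
Lemma lin0 : E 0 = 0.
Proof.
have := hE 1 0 0; rewrite !scale1r addr0.
by move=> /(congr1 (fun z => z - E 0)); rewrite subrr addrK => <-.
Qed.
Lemma linZ c X : E (c *: X) = c *: E X.
Proof. by have := hE c X 0; rewrite !addr0 lin0 addr0. Qed.
Lemma linD X Y : E (X + Y) = E X + E Y.
Proof. by have := hE 1 X Y; rewrite !scale1r. Qed.
Lemma lin_sum (I : finType) (X : I -> 'M[C]_m) : E (\sum_r X r) = \sum_r E (X r).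
Proof.
apply: (big_ind2 (fun a b => E a = b)); first exact: lin0.
  by move=> ? ? ? ? <- <-; rewrite linD.
by [].
Qed.
End Lin.

Lemma CP_ext x a (E E' : 'M[C]_x -> 'M[C]_a) :
  (forall X, E X = E' X) -> CP E -> CP E'.
Proof.
by move=> h; have -> : E = E' by apply: functional_extensionality_dep.
Qed.

Lemma CP_scale x a c (E : 'M[C]_x -> 'M[C]_a) :
  0 <= c -> CP E -> CP (fun X => c *: E X).
Proof.
move=> hc [hl hp]; split.
  by move=> d u v /=; rewrite hl scalerDr !scalerA mulrC.
by move=> k M hM; rewrite tensmap_Zr; apply: psd_scale => //; apply: hp.
Qed.

Lemma CP_add x a (E F : 'M[C]_x -> 'M[C]_a) :
  CP E -> CP F -> CP (fun X => E X + F X).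
Proof.
move=> [hl hp] [hl' hp']; split.
  by move=> d u v /=; rewrite hl hl' scalerDr addrACA.
by move=> k M hM; rewrite tensmap_Dr; apply: psd_add; [apply: hp | apply: hp'].
Qed.

Lemma CP_0 x a : CP (fun _ : 'M[C]_x => (0 : 'M[C]_a)).
Proof.
split; first by move=> d u v; rewrite scaler0 addr0.
by move=> k M hM; rewrite tensmap_0r; apply: psd0.
Qed.

Lemma CP_sum x a (I : finType) (E : I -> 'M[C]_x -> 'M[C]_a) :
  (forall r, CP (E r)) -> CP (fun X => \sum_r E r X).
Proof.
move=> h; split.
  move=> d u v /=; rewrite scaler_sumr -big_split; apply: eq_bigr => r _.
  by case: (h r) => hl _; rewrite hl.
move=> k M hM; rewrite tensmap_sumr; apply: psd_sum => r.
by case: (h r) => _ hp; apply: hp.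
Qed.

Lemma qf_delta n (v : 'cV[C]_n) i j : qf v (delta_mx i j) = (v i 0)^* * v j 0.
Proof.
rewrite qfE (bigD1 i) //= [X in _ + X]big1 ?addr0; last first.
  by move=> p np; apply: big1 => q _; rewrite mxE (negbTE np) mulr0 mul0r.
rewrite (bigD1 j) //= [X in _ + X]big1 ?addr0; last first.
  by move=> q nq; rewrite mxE (negbTE nq) andbF mulr0 mul0r.
by rewrite mxE !eqxx mulr1.
Qed.

Lemma tens_delta m n (i j : 'I_m) (p q : 'I_n) :
  delta_mx i j *t delta_mx p q =
  delta_mx (mxtens_index (i, p)) (mxtens_index (j, q)) :> 'M[C]_(m * n).
Proof.
have mI := inj_eq (can_inj (@mxtens_indexK m n)).
apply/matrixP => P Q.
case: (mxtens_indexP P) => i1 p1; case: (mxtens_indexP Q) => j1 q1.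
rewrite tensmxE !mxE !mI /= !xpair_eqE.
by case: (i1 == i); case: (j1 == j); case: (p1 == p); case: (q1 == q);
  rewrite /= ?mulr1 ?mulr0 ?mul0r.
Qed.

Lemma qf_tens m n (u : 'cV[C]_(m * n)) (M : 'M[C]_(m * n)) :
  qf u M = \sum_(i < m) \sum_(j < m) \sum_(k < n) \sum_(l < n)
    (u (mxtens_index (i, k)) 0)^* * M (mxtens_index (i, k)) (mxtens_index (j, l))
     * u (mxtens_index (j, l)) 0.
Proof.
rewrite qfE sum_tens; apply: eq_bigr => i _.
rewrite [RHS]exchange_big; apply: eq_bigr => k _.
by rewrite sum_tens.
Qed.

Section Rank1.
Variables (x a : nat) (w : 'cV[C]_x).
Definition r1map (X : 'M[C]_x) : 'M[C]_a.+1 := qf w X *: delta_mx ord0 ord0.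

Lemma CP_r1 : CP r1map.
Proof.
split.
  by move=> d u v; rewrite /r1map qfD qfZ scalerDl scalerA.
move=> k M hM v; change (0 <= qf v (tensmap (fun N : 'M[C]_k => N) r1map M)).
set u : 'cV[C]_(k * x) :=
  \col_P (v (mxtens_index ((mxtens_unindex P).1, ord0)) 0 * w (mxtens_unindex P).2 0).
suff -> : qf v (tensmap (fun N : 'M[C]_k => N) r1map M) = qf u M by apply: hM.
rewrite /tensmap [RHS]qf_tens.
rewrite qf_sum; apply: eq_bigr => i _.
rewrite qf_sum; apply: eq_bigr => j _.
rewrite qf_sum; apply: eq_bigr => p _; rewrite qf_sum; apply: eq_bigr => q _.
rewrite qfZ /r1map tensZr qfZ tens_delta qf_delta qf_delta !mxE !mxtens_indexK /=.
rewrite rmorphM /=; ring.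
Qed.
End Rank1.

Lemma qf_unit n (P : 'I_n) (N : 'M[C]_n) : qf (delta_mx P 0) N = N P P.
Proof.
rewrite qfE (bigD1 P) //= [X in _ + X]big1 ?addr0; last first.
  by move=> p np; apply: big1 => q _; rewrite !mxE (negbTE np) /= rmorph0 !mul0r.
rewrite (bigD1 P) //= [X in _ + X]big1 ?addr0; last first.
  by move=> q nq; rewrite !mxE (negbTE nq) /= mulr0.
by rewrite !mxE !eqxx /= rmorph1 mul1r mulr1.
Qed.

Lemma psd_tr n (N : 'M[C]_n) : psd N -> 0 <= \tr N.
Proof.
by move=> h; apply: sumr_ge0 => P _; rewrite -qf_unit; apply: h.
Qed.

Lemma psd_rank1 n (u : 'cV[C]_n) : psd (u *m (map_mx Num.conj u)^T).
Proof.
move=> v; change (0 <= qf v (u *m (map_mx Num.conj u)^T)).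
rewrite /qf !mulmxA -(mulmxA _ _ v) mxE big_ord1.
set z := ((map_mx Num.conj v)^T *m u) 0 0.
suff -> : ((map_mx Num.conj u)^T *m v) 0 0 = z^* by apply: mul_conjC_ge0.
rewrite /z !mxE rmorph_sum; apply: eq_bigr => p _.
by rewrite !mxE rmorphM /= conjCK mulrC.
Qed.

Lemma sum1 (V : nmodType) (T : finType) (i : T) (F : T -> V) :
  (forall k, k != i -> F k = 0) -> \sum_k F k = F i.
Proof. by move=> h; rewrite (bigD1 i) //= big1 ?addr0 // => k /h. Qed.

Lemma sum2 (V : nmodType) (T : finType) (i j : T) (F : T -> V) : i != j ->
  (forall k, k != i -> k != j -> F k = 0) -> \sum_k F k = F i + F j.
Proof.
move=> nij h; rewrite (bigD1 i) //= (bigD1 j) /=; last by rewrite eq_sym.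
by rewrite big1 ?addr0 // => k /andP [ki kj]; apply: h.
Qed.

Section Pos.
Variables (x a : nat) (E : 'M[C]_x -> 'M[C]_a).
Hypothesis hE : CP E.
Definition tE i j := \tr (E (delta_mx i j)).

Lemma trE X : \tr (E X) = \sum_i \sum_j X i j * tE i j.
Proof.
case: hE => hl _.
rewrite {1}(matrix_sum_delta X) lin_sum // raddf_sum; apply: eq_bigr => i _.
rewrite lin_sum // raddf_sum; apply: eq_bigr => j _.
by rewrite (linZ hl) /= mxtraceZ.
Qed.

Lemma CP_pos (f : 'I_x -> C) : 0 <= \sum_i \sum_j f i * (f j)^* * tE i j.
Proof.
case: hE => hl hp.
set u : 'cV[C]_(1 * x) := \col_P f (mxtens_unindex P).2.
have := psd_tr (hp 1%N _ (psd_rank1 u)).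
rewrite /tensmap raddf_sum big_ord1 raddf_sum big_ord1 raddf_sum.
congr (_ <= _); apply: eq_bigr => i _; rewrite raddf_sum; apply: eq_bigr => j _.
rewrite [LHS]/= mxtraceZ tr_tens !mxE big_ord1 !mxE !mxtens_indexK /=.
by rewrite /mxtrace big_ord1 mxE eqxx mul1r.
Qed.

Lemma CP_pos2 (p q : 'I_x) (l c : C) : p != q ->
  0 <= l * l^* * tE p p + l * c^* * tE p q + c * l^* * tE q p + c * c^* * tE q q.
Proof.
move=> npq.
have := CP_pos (fun k => (if k == p then l else 0) + (if k == q then c else 0)).
rewrite (sum2 npq); last first.
  move=> k kp kq; rewrite (negbTE kp) (negbTE kq) addr0; apply: big1 => j _.
  by rewrite !mul0r.
rewrite (sum2 npq); last first.
  by move=> k kp kq; rewrite (negbTE kp) (negbTE kq) addr0 rmorph0 mulr0 mul0r.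
rewrite (sum2 npq); last first.
  by move=> k kp kq; rewrite (negbTE kp) (negbTE kq) addr0 rmorph0 mulr0 mul0r.
rewrite !eqxx (negbTE npq) eq_sym (negbTE npq) !addr0 !add0r.
by rewrite !addrA.
Qed.

Lemma tE_ge0 p : 0 <= tE p p.
Proof.
have := CP_pos (fun k => if k == p then 1 else 0).
rewrite (sum1 (i:=p)); last first.
  by move=> k kp; rewrite (negbTE kp); apply: big1 => j _; rewrite !mul0r.
rewrite (sum1 (i:=p)); last by move=> k kp; rewrite (negbTE kp) rmorph0 mulr0 mul0r.
by rewrite eqxx rmorph1 !mul1r.
Qed.

Lemma tE_herm p q : tE q p = (tE p q)^*.
Proof.
have [->|npq] := eqVneq p q.
  by rewrite conj_Creal // ger0_real // tE_ge0.
set al := tE p q; set be := tE q p.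
have rp := ger0_real (tE_ge0 p); have rq := ger0_real (tE_ge0 q).
have h1 := ger0_real (CP_pos2 1 1 npq).
have h2 := ger0_real (CP_pos2 1 'i npq).
move/CrealP: h1; move/CrealP: h2.
rewrite !rmorphD !rmorphM /= !rmorph1 !conjCK !conjCi (conj_Creal rp) (conj_Creal rq).
rewrite -/al -/be !mul1r !mulr1.
set tp := tE p p; set tq := tE q q.
move=> e2 e1.
have : (be - al^*) *+ 2 = 0.
  rewrite (_ : (be - al^*) *+ 2 =
    'i * ((tp + 'i * al^* + - 'i * be^* + - 'i * 'i * tq) -
          (tp + - 'i * al + 'i * be + 'i * - 'i * tq))
    - ((tp + al^* + be^* + tq) - (tp + al + be + tq))
    - ('i ^+ 2 + 1) * (al^* - be^* + al - be)); last by ring.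
  by rewrite e2 e1 !subrr mulr0 sqrCi addNr mul0r !subr0.
by move/eqP; rewrite mulrn_eq0 /= subr_eq0 => /eqP.
Qed.

Lemma tE_bound p q : `|tE p q| *+ 2 <= tE p p + tE q q.
Proof.
have [<-|npq] := eqVneq p q; first by rewrite ger0_norm ?tE_ge0 // mulr2n.
set t := tE p q; have [t0|tn0] := eqVneq t 0.
  by rewrite t0 normr0 mul0rn addr_ge0 ?tE_ge0.
have nn0 : `|t| != 0 by rewrite normr_eq0.
have ct : t^* = `|t| ^+ 2 / t by rewrite normCK [t * _]mulrC mulfK.
have cn : (`|t|^-1)^* = `|t|^-1 by rewrite conj_Creal // rpredV normr_real.
have := CP_pos2 1 (- t / `|t|) npq.
rewrite (tE_herm p q) -/t !rmorphM !rmorphN /= rmorph1 cn ct.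
suff -> : 1 * 1 * tE p p + 1 * (- (`|t| ^+ 2 / t) / `|t|) * t + - t / `|t| * 1 * (`|t| ^+ 2 / t) +
  - t / `|t| * (- (`|t| ^+ 2 / t) / `|t|) * tE q q = tE p p + tE q q - `|t| *+ 2.
  by rewrite subr_ge0.
by field; rewrite ?tn0 ?nn0.
Qed.

End Pos.

Lemma bil_delta n (i j : 'I_n) (X : 'M[C]_n) :
  ((map_mx Num.conj (delta_mx i 0 : 'cV[C]_n))^T *m X *m (delta_mx j 0 : 'cV[C]_n)) 0 0 = X i j.
Proof.
rewrite (map_delta_mx Num.conj) trmx_delta -colE -(rowE i X).
by rewrite !mxE.
Qed.

Lemma bil_delta_mx n (i j : 'I_n) (X : 'M[C]_n) :
  ((map_mx Num.conj (delta_mx i 0 : 'cV[C]_n))^T *m X *m (delta_mx j 0 : 'cV[C]_n)) = (X i j)%:M.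
Proof.
by apply/matrixP => p q; rewrite [p]ord1 [q]ord1 bil_delta mxE.
Qed.

Lemma qf_w n (i j : 'I_n) c (X : 'M[C]_n) :
  qf (delta_mx i 0 + c *: delta_mx j 0 : 'cV[C]_n) X =
  X i i + c * X i j + c^* * X j i + c^* * c * X j j.
Proof.
rewrite /qf map_mxD map_mxZ /= [(_ + _)^T]linearD /= [(_ *: _)^T]linearZ /= !mulmxDl !mulmxDr.
rewrite -!scalemxAl -!scalemxAr !bil_delta_mx !mxE /=.
by rewrite !mulr1n mulrA addrA.
Qed.

Section Compl.
Variables (x a : nat) (E : 'M[C]_x -> 'M[C]_a.+1).
Hypothesis hE : CP E.
Let t := tE E.

Lemma pair_id (i j : 'I_x) (X : 'M[C]_x) :
  let c := if t i j == 0 then 0 else - t i j / `|t i j| in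
  `|t i j| * qf (delta_mx i 0 + c *: delta_mx j 0 : 'cV[C]_x) X =
  `|t i j| * X i i + `|t i j| * X j j - t i j * X i j - t j i * X j i.
Proof.
rewrite /= qf_w /t (tE_herm hE i j).
have [t0|tn0] := eqVneq (tE E i j) 0.
  by rewrite t0 normr0 rmorph0 !mul0r !subr0 addr0.
have nn0 : `|tE E i j| != 0 by rewrite normr_eq0.
set u := tE E i j.
have ct : u^* = `|u| ^+ 2 / u by rewrite normCK [u * _]mulrC mulfK.
have cn : (`|u|^-1)^* = `|u|^-1 by rewrite conj_Creal // rpredV normr_real.
rewrite !rmorphM !rmorphN /= cn ct.
by field; rewrite ?tn0 ?nn0.
Qed.

Lemma tr_sum n (I : finType) (A : I -> 'M[C]_n) : \tr (\sum_r A r) = \sum_r \tr (A r).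
Proof. exact: raddf_sum. Qed.

Lemma tr_delta n (i : 'I_n) : \tr (delta_mx i i : 'M[C]_n) = 1.
Proof. by rewrite /mxtrace (sum1 (i:=i)) ?mxE ?eqxx // => k ki; rewrite mxE (negbTE ki). Qed.

Definition cw i j := if t i j == 0 then 0 else - t i j / `|t i j|.
Definition Gmap (Lam : C) (X : 'M[C]_x) : 'M[C]_a.+1 :=
  \sum_i ((Lam - (\sum_j `|t i j|) *+ 2) *: r1map a (delta_mx i 0 : 'cV[C]_x) X) +
  \sum_i \sum_j (`|t i j| *: r1map a (delta_mx i 0 + cw i j *: delta_mx j 0 : 'cV[C]_x) X).

Lemma Gmap_CP (Lam : C) : (\sum_i \sum_j `|t i j|) *+ 2 <= Lam -> CP (Gmap Lam).
Proof.
move=> hL.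
pose d i := Lam - (\sum_j `|t i j|) *+ 2.
have d0 i : 0 <= d i.
  rewrite subr_ge0; apply: le_trans hL; rewrite lerMn2r /=.
  rewrite [leRHS](bigD1 i) //= lerDl; apply: sumr_ge0 => k _.
  by apply: sumr_ge0 => j _.
apply: CP_add; apply: CP_sum => i.
  by apply: CP_scale => //; [apply: d0 | apply: CP_r1].
by apply: CP_sum => j; apply: CP_scale => //; apply: CP_r1.
Qed.

Lemma Gmap_tr (Lam : C) X : \tr (E X) *+ 2 + \tr (Gmap Lam X) = Lam * \tr X.
Proof.
pose c := cw; pose w i j : 'cV[C]_x := delta_mx i 0 + c i j *: delta_mx j 0.
pose d i := Lam - (\sum_j `|t i j|) *+ 2.
rewrite /Gmap -/d.
have trr (v : 'cV[C]_x) : \tr (r1map a v X) = qf v X.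
  by rewrite /r1map mxtraceZ tr_delta mulr1.
rewrite mxtraceD !raddf_sum /=.
under eq_bigr do rewrite mxtraceZ trr qf_unit.
have e3 : \sum_i \tr (\sum_j `|t i j| *: r1map a (w i j) X) =
  \sum_i \sum_j (`|t i j| * X i i + `|t i j| * X j j - t i j * X i j - t j i * X j i).
  apply: eq_bigr => i _; rewrite tr_sum; apply: eq_bigr => j _.
  by rewrite mxtraceZ trr /w /c pair_id.
rewrite e3.
set S := \sum_i \sum_j `|t i j| * X i i.
set T := \sum_i \sum_j X i j * t i j.
have h1 : \sum_i \sum_j (`|t i j| * X i i + `|t i j| * X j j - t i j * X i j - t j i * X j i)
   = S *+ 2 - T *+ 2.
  under eq_bigr => i _ do rewrite !sumrB !big_split.
  rewrite !sumrB !big_split /= -/S.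
  have hB : \sum_i \sum_j `|t i j| * X j j = S.
    rewrite exchange_big; apply: eq_bigr => i _; apply: eq_bigr => j _.
    by rewrite /t (tE_herm hE j i) norm_conjC.
  have hC : \sum_i \sum_j t i j * X i j = T.
    by apply: eq_bigr => i _; apply: eq_bigr => j _; rewrite mulrC.
  have hD : \sum_i \sum_j t j i * X j i = T.
    by rewrite exchange_big; apply: eq_bigr => i _; apply: eq_bigr => j _; rewrite mulrC.
  rewrite hB hC hD; ring.
have h2 : \sum_i d i * X i i = Lam * \tr X - S *+ 2.
  rewrite /d; under eq_bigr do rewrite mulrBl.
  rewrite sumrB -mulr_sumr; congr (_ - _).
  rewrite /S -sumrMnl; apply: eq_bigr => i _.
  by rewrite mulrnAl mulr_suml.
rewrite h1 h2 (trE hE) -/T; ring.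
Qed.

End Compl.

Lemma sum_tens3 (V : nmodType) m n k l (F : 'I_(m * n * k * l) -> V) :
  \sum_(P < m * n * k * l) F P = \sum_(i < m) \sum_(j < n) \sum_(p < k) \sum_(q < l)
     F (mxtens_index (mxtens_index (mxtens_index (i, j), p), q)).
Proof.
rewrite sum_tens sum_tens sum_tens; apply: eq_bigr => i _; apply: eq_bigr => j _.
by [].
Qed.

Lemma locc_sep x y a b (M : 'M[C]_(x * y) -> 'M[C]_(a * b)) :
  LOCCstar M -> SEP M.
Proof.
move=> [hM [nIA [nOA [nIB [nOB [A [B [p [[hAcp hAtp] [[hBcp hBtp] [hp [hp1 hMX]]]]]]]]]]]].
split => //.
pose dec (P : 'I_(nIA * nIB * nOA * nOB)) :=
  ((mxtens_unindex (mxtens_unindex (mxtens_unindex P).1).1).1,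
   (mxtens_unindex (mxtens_unindex (mxtens_unindex P).1).1).2,
   (mxtens_unindex (mxtens_unindex P).1).2, (mxtens_unindex P).2).
exists (nIA * nIB * nOA * nOB)%N.
exists (fun P X => p (dec P).1.1.1 (dec P).1.1.2 (dec P).1.2 (dec P).2 *: A (dec P).1.1.1 (dec P).1.2 X).
exists (fun P => B (dec P).1.1.2 (dec P).2).
split; first by move=> P; apply: CP_scale => //.
split; first by move=> P; apply: hBcp.
move=> X; rewrite hMX sum_tens3.
apply: eq_bigr => iA _; apply: eq_bigr => iB _; apply: eq_bigr => oA _; apply: eq_bigr => oB _.
by rewrite tensmap_Zl /dec !mxtens_indexK.
Qed.

Lemma locc_fin x y a b (M : 'M[C]_(x * y) -> 'M[C]_(a * b)) (IA OA IB OB : finType)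
  (A : IA -> OA -> 'M[C]_x -> 'M[C]_a) (B : IB -> OB -> 'M[C]_y -> 'M[C]_b)
  (p : IA -> IB -> OA -> OB -> C) :
  CPTP M -> (forall i o, CP (A i o)) -> (forall i, TP (fun X => \sum_o A i o X)) ->
  (forall i o, CP (B i o)) -> (forall i, TP (fun X => \sum_o B i o X)) ->
  (forall iA iB oA oB, 0 <= p iA iB oA oB) ->
  (forall oA oB, \sum_iA \sum_iB p iA iB oA oB = 1) ->
  (forall X, M X = \sum_iA \sum_iB \sum_oA \sum_oB
                     p iA iB oA oB *: tensmap (A iA oA) (B iB oB) X) ->
  LOCCstar M.
Proof.
move=> hM hAc hAt hBc hBt hp hp1 hMX; split => //.
exists #|IA|, #|OA|, #|IB|, #|OB|.
exists (fun i o => A (enum_val i) (enum_val o)), (fun i o => B (enum_val i) (enum_val o)).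
exists (fun iA iB oA oB => p (enum_val iA) (enum_val iB) (enum_val oA) (enum_val oB)).
split.
  split=> [i o|i X]; first exact: hAc.
  by rewrite (sum_enum (fun o => A (enum_val i) o X)); apply: hAt.
split.
  split=> [i o|i X]; first exact: hBc.
  by rewrite (sum_enum (fun o => B (enum_val i) o X)); apply: hBt.
split; first by move=> *; apply: hp.
split.
  move=> oA oB.
  rewrite (sum_enum (fun iA => \sum_(iB < #|IB|) p iA (enum_val iB) (enum_val oA) (enum_val oB))).
  rewrite -(hp1 (enum_val oA) (enum_val oB)); apply: eq_bigr => iA _.
  by rewrite (sum_enum (fun iB => p iA iB (enum_val oA) (enum_val oB))).
move=> X; rewrite hMX.
rewrite (sum_enum (fun iA => \sum_(iB < #|IB|) \sum_(oA < #|OA|) \sum_(oB < #|OB|)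
   p iA (enum_val iB) (enum_val oA) (enum_val oB) *:
   tensmap (A iA (enum_val oA)) (B (enum_val iB) (enum_val oB)) X)).
apply: eq_bigr => iA _.
rewrite (sum_enum (fun iB => \sum_(oA < #|OA|) \sum_(oB < #|OB|)
   p iA iB (enum_val oA) (enum_val oB) *:
   tensmap (A iA (enum_val oA)) (B iB (enum_val oB)) X)).
apply: eq_bigr => iB _.
rewrite (sum_enum (fun oA => \sum_(oB < #|OB|)
   p iA iB oA (enum_val oB) *: tensmap (A iA oA) (B iB (enum_val oB)) X)).
apply: eq_bigr => oA _.
by rewrite (sum_enum (fun oB => p iA iB oA oB *: tensmap (A iA oA) (B iB oB) X)).
Qed.

Section Bound.
Variables (x y a b : nat) (M : 'M[C]_(x * y) -> 'M[C]_(a * b)) (L : nat).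
Variables (EA : 'I_L -> 'M[C]_x -> 'M[C]_a) (EB : 'I_L -> 'M[C]_y -> 'M[C]_b).
Hypotheses (hTP : TP M) (hA : forall k, CP (EA k)) (hB : forall k, CP (EB k)).
Hypothesis hMX : forall X, M X = \sum_k tensmap (EA k) (EB k) X.

Lemma diag_bound k i p : tE (EA k) i i * tE (EB k) p p <= 1.
Proof.
have := hTP (delta_mx (mxtens_index (i, p)) (mxtens_index (i, p))).
rewrite hMX tr_sum tr_delta.
under eq_bigr do rewrite tensmap_delta tr_tens.
rewrite (bigD1 k) //= => <-; rewrite lerDl; apply: sumr_ge0 => k' _.
by apply: mulr_ge0; apply: tE_ge0.
Qed.

Lemma entry_bound k i j p q : `|tE (EA k) i j| * `|tE (EB k) p q| <= 1.
Proof.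
have h1 := tE_bound (hA k) i j; have h2 := tE_bound (hB k) p q.
suff : (`|tE (EA k) i j| * `|tE (EB k) p q|) *+ 4 <= 1 *+ 4 by rewrite lerMn2r.
have -> : (`|tE (EA k) i j| * `|tE (EB k) p q|) *+ 4 =
  (`|tE (EA k) i j| *+ 2) * (`|tE (EB k) p q| *+ 2).
  by rewrite mulrnAl mulrnAr -mulrnA.
apply: le_trans (ler_pM _ _ h1 h2) _; rewrite ?mulrn_wge0 //.
have d1 := diag_bound k i p; have d2 := diag_bound k i q.
have d3 := diag_bound k j p; have d4 := diag_bound k j q.
rewrite mulrDl !mulrDr.
have -> : (1 : C) *+ 4 = 1 + 1 + (1 + 1) by rewrite -!mulr2n -mulrnA.
by apply: lerD; apply: lerD.
Qed.

Lemma prod_bound k :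
  (\sum_i \sum_j `|tE (EA k) i j|) * (\sum_p \sum_q `|tE (EB k) p q|) <=
  (y * y * x * x)%:R.
Proof.
rewrite mulr_suml.
apply: le_trans (_ : \sum_(i < x) \sum_(j < x) \sum_(p < y) \sum_(q < y) (1 : C) <= _).
  apply: ler_sum => i _; rewrite mulr_suml; apply: ler_sum => j _.
  rewrite mulr_sumr; apply: ler_sum => p _; rewrite mulr_sumr; apply: ler_sum => q _.
  exact: entry_bound.
by rewrite !sumr_const !card_ord -!mulrnA !mulnA.
Qed.

End Bound.

End S.

Section Main.
Variable C : numClosedFieldType.

Lemma swap4 (V : nmodType) (I J K L : finType) (F : I -> J -> K -> L -> V) :
  \sum_i \sum_j \sum_k \sum_l F i j k l = \sum_k \sum_l \sum_i \sum_j F i j k l.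
Proof.
under eq_bigr do rewrite exchange_big.
rewrite exchange_big; apply: eq_bigr => k _.
under eq_bigr do rewrite exchange_big.
by rewrite exchange_big.
Qed.

Lemma sum_pair_ind (V : lmodType C) (I J : finType) (t : I * J) (v : C) (F : I -> J -> V) :
  \sum_i \sum_j (if (i, j) == t then v else 0) *: F i j = v *: F t.1 t.2.
Proof.
rewrite (pair_bigA _ (fun i j => (if (i, j) == t then v else 0) *: F i j)) /=.
rewrite (sum1 (i:=t)); first by case: t => i j; rewrite eqxx.
by move=> [i j] /= /negbTE ->; rewrite scale0r.
Qed.

Lemma sum_pair_ind1 (I J : finType) (t : I * J) (v : C) :
  \sum_i \sum_j (if (i, j) == t then v else 0) = v.
Proof.
rewrite (pair_bigA _ (fun i j => (if (i, j) == t then v else 0))) /=.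
rewrite (sum1 (i:=t)); first by case: t => i j; rewrite eqxx.
by move=> [i j] /= /negbTE ->.
Qed.

Section Constr.
Variables (x y a b : nat) (M : 'M[C]_(x * y) -> 'M[C]_(a.+1 * b.+1)) (L : nat).
Variables (EA : 'I_L -> 'M[C]_x -> 'M[C]_a.+1) (EB : 'I_L -> 'M[C]_y -> 'M[C]_b.+1).
Hypotheses (hM : CPTP M) (hA : forall k, CP (EA k)) (hB : forall k, CP (EB k)).
Hypothesis hMX : forall X, M X = \sum_k tensmap (EA k) (EB k) X.

Definition R := (y * y * x * x + 3)%N.
Definition sA k := \sum_i \sum_j `|tE (EA k) i j|.
Definition sB k := \sum_i \sum_j `|tE (EB k) i j|.
Definition muA k := sA k + (1 + sB k)^-1.
Definition muB k := sB k + (1 + sA k)^-1.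
Definition wt k := muA k * muB k / R%:R.

Lemma sA0 k : 0 <= sA k.
Proof. by apply: sumr_ge0 => i _; apply: sumr_ge0. Qed.
Lemma sB0 k : 0 <= sB k.
Proof. by apply: sumr_ge0 => i _; apply: sumr_ge0. Qed.

Lemma inv1p_gt0 s : 0 <= s -> 0 < (1 + s)^-1 :> C.
Proof. by move=> h; rewrite invr_gt0; apply: (lt_le_trans ltr01); rewrite lerDl. Qed.
Lemma inv1p_le1 s : 0 <= s -> (1 + s)^-1 <= 1 :> C.
Proof.
move=> h; rewrite invf_le1 ?lerDl //; apply: (lt_le_trans ltr01); by rewrite lerDl.
Qed.
Lemma div1p_le1 s : 0 <= s -> s * (1 + s)^-1 <= 1 :> C.
Proof.
move=> h; rewrite ler_pdivrMr ?mul1r ?lerDr //; apply: (lt_le_trans ltr01); by rewrite lerDl.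
Qed.

Lemma muA_gt0 k : 0 < muA k.
Proof. by rewrite /muA; apply: (lt_le_trans (inv1p_gt0 (sB0 k))); rewrite lerDr sA0. Qed.
Lemma muB_gt0 k : 0 < muB k.
Proof. by rewrite /muB; apply: (lt_le_trans (inv1p_gt0 (sA0 k))); rewrite lerDr sB0. Qed.

Lemma R_neq0 : R%:R != 0 :> C.
Proof. by rewrite pnatr_eq0 /R addn3. Qed.

Lemma wt_ge0 k : 0 <= wt k.
Proof.
by rewrite /wt divr_ge0 ?ler0n // mulr_ge0 // ltW // ?muA_gt0 ?muB_gt0.
Qed.

Lemma wt_le1 k : wt k <= 1.
Proof.
rewrite /wt ler_pdivrMr ?mul1r ?ltr0n ?/R ?addn3 // -/R.
have -> : muA k * muB k = sA k * sB k + sA k * (1 + sA k)^-1 + sB k * (1 + sB k)^-1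
   + (1 + sB k)^-1 * (1 + sA k)^-1 by rewrite /muA /muB; ring.
rewrite -addn3 natrD -!addrA; apply: lerD.
  by apply: (prod_bound (M := M) (hM.2) hA hB hMX).
have -> : (3%:R : C) = 1 + (1 + 1) by [].
apply: lerD; first exact: div1p_le1 (sA0 k).
apply: lerD; first exact: div1p_le1 (sB0 k).
by apply: mulr_ile1; [exact: ltW (inv1p_gt0 (sB0 k)) | exact: ltW (inv1p_gt0 (sA0 k)) | exact: inv1p_le1 (sB0 k) | exact: inv1p_le1 (sA0 k)].
Qed.

Definition FA k X := (muA k)^-1 *: EA k X.
Definition GA k X := (muA k *+ 2)^-1 *: Gmap (EA k) (muA k *+ 2) X.
Definition TA := Gmap (fun _ : 'M[C]_x => 0 : 'M[C]_a.+1) 1.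
Definition ZA := fun _ : 'M[C]_x => 0 : 'M[C]_a.+1.
Definition FB k X := (muB k)^-1 *: EB k X.
Definition GB k X := (muB k *+ 2)^-1 *: Gmap (EB k) (muB k *+ 2) X.
Definition TB := Gmap (fun _ : 'M[C]_y => 0 : 'M[C]_b.+1) 1.
Definition ZB := fun _ : 'M[C]_y => 0 : 'M[C]_b.+1.

Lemma tE0 n m (i j : 'I_n) : tE (fun _ : 'M[C]_n => 0 : 'M[C]_m) i j = 0.
Proof. by rewrite /tE mxtrace0. Qed.

Lemma CP_T n m : CP (Gmap (fun _ : 'M[C]_n => 0 : 'M[C]_m.+1) 1).
Proof.
apply: Gmap_CP.
rewrite big1 ?mul0rn ?ler01 // => i _; rewrite big1 // => j _.
by rewrite tE0 normr0.
Qed.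

Lemma tr_T n m X : \tr (Gmap (fun _ : 'M[C]_n => 0 : 'M[C]_m.+1) 1 X) = \tr X.
Proof.
by have := Gmap_tr (CP_0 C n m.+1) 1 X; rewrite mxtrace0 mul0rn add0r mul1r.
Qed.

Lemma CP_FA k : CP (FA k).
Proof. by apply: CP_scale; [rewrite invr_ge0 ltW ?muA_gt0 | apply: hA]. Qed.
Lemma CP_FB k : CP (FB k).
Proof. by apply: CP_scale; [rewrite invr_ge0 ltW ?muB_gt0 | apply: hB]. Qed.
Lemma CP_GA k : CP (GA k).
Proof.
apply: CP_scale; first by rewrite invr_ge0 mulrn_wge0 // ltW ?muA_gt0.
apply: Gmap_CP => //; rewrite lerMn2r /= /muA -/(sA k) lerDl.
exact: ltW (inv1p_gt0 (sB0 k)).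
Qed.
Lemma CP_GB k : CP (GB k).
Proof.
apply: CP_scale; first by rewrite invr_ge0 mulrn_wge0 // ltW ?muB_gt0.
apply: Gmap_CP => //; rewrite lerMn2r /= /muB -/(sB k) lerDl.
exact: ltW (inv1p_gt0 (sA0 k)).
Qed.

Lemma tr_FGA k X : \tr (FA k X + GA k X) = \tr X.
Proof.
have h := Gmap_tr (hA k) (muA k *+ 2) X.
have m0 : muA k != 0 by rewrite gt_eqF ?muA_gt0.
rewrite mxtraceD /FA /GA !mxtraceZ.
move: h; set e := \tr (EA k X); set g := \tr (Gmap _ _ X) => h.
have -> : g = muA k *+ 2 * \tr X - e *+ 2 by rewrite -h addrC addKr.
by field; rewrite m0.
Qed.

Lemma tr_FGB k X : \tr (FB k X + GB k X) = \tr X.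
Proof.
have h := Gmap_tr (hB k) (muB k *+ 2) X.
have m0 : muB k != 0 by rewrite gt_eqF ?muB_gt0.
rewrite mxtraceD /FB /GB !mxtraceZ.
move: h; set e := \tr (EB k X); set g := \tr (Gmap _ _ X) => h.
have -> : g = muB k *+ 2 * \tr X - e *+ 2 by rewrite -h addrC addKr.
by field; rewrite m0.
Qed.

Definition IA := ('I_L * 'I_R + bool)%type.
Definition IB := ('I_L + unit)%type.

Definition Ainst (iA oA : IA) : 'M[C]_x -> 'M[C]_a.+1 :=
  match iA with
  | inl kr => if oA == inl kr then FA kr.1 else if oA == inr false then GA kr.1 else ZA
  | inr bb => if oA == inr bb then TA else ZA
  end.
Definition Binst (iB oB : IB) : 'M[C]_y -> 'M[C]_b.+1 :=
  match iB with
  | inl k => if oB == inl k then FB k else if oB == inr tt then GB k else ZB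
  | inr _ => if oB == inr tt then TB else ZB
  end.

Definition t1 (oA : IA) (oB : IB) : IA * IB :=
  match oA, oB with
  | inl kr, inl k' => if kr.1 == k' then (inl kr, inl k') else (inr false, inr tt)
  | inr false, _ => (inr true, inr tt)
  | _, _ => (inr false, inr tt)
  end.
Definition m1 (oA : IA) (oB : IB) : C :=
  match oA, oB with
  | inl kr, inl k' => if kr.1 == k' then wt kr.1 else 1
  | _, _ => 1
  end.
Definition pr (iA : IA) (iB : IB) (oA : IA) (oB : IB) : C :=
  (if (iA, iB) == t1 oA oB then m1 oA oB else 0) +
  (if (iA, iB) == ((inr false : IA), (inr tt : IB)) then 1 - m1 oA oB else 0).

Lemma m1_range oA oB : 0 <= m1 oA oB <= 1.
Proof.
case: oA => [kr|bb]; case: oB => [k'|[]] //=; rewrite ?ler01 ?lexx //.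
by case: ifP => _; rewrite ?wt_ge0 ?wt_le1 ?ler01 ?lexx.
Qed.

Lemma CP_Ainst iA oA : CP (Ainst iA oA).
Proof.
case: iA => [kr|bb] /=.
  case: ifP => _; first exact: CP_FA.
  by case: ifP => _; [exact: CP_GA | exact: CP_0].
by case: ifP => _; [exact: CP_T | exact: CP_0].
Qed.

Lemma CP_Binst iB oB : CP (Binst iB oB).
Proof.
case: iB => [k|u] /=.
  case: ifP => _; first exact: CP_FB.
  by case: ifP => _; [exact: CP_GB | exact: CP_0].
by case: ifP => _; [exact: CP_T | exact: CP_0].
Qed.

Lemma TP_Ainst iA : TP (fun X => \sum_o Ainst iA o X).
Proof.
move=> X; case: iA => [kr|bb] /=.
  rewrite (sum2 (i:=inl kr) (j:=inr false)) //; last first.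
    by move=> k /negbTE -> /negbTE ->.
  by rewrite eqxx /= tr_FGA.
rewrite (sum1 (i:=inr bb)); first by rewrite eqxx tr_T.
by move=> k /negbTE ->.
Qed.

Lemma TP_Binst iB : TP (fun X => \sum_o Binst iB o X).
Proof.
move=> X; case: iB => [k|[]] /=.
  rewrite (sum2 (i:=inl k) (j:=inr tt)) //; last first.
    by move=> k' /negbTE -> /negbTE ->.
  by rewrite eqxx /= tr_FGB.
rewrite (sum1 (i:=inr tt)); first by rewrite eqxx tr_T.
by move=> k' /negbTE ->.
Qed.

Lemma sum_ind' (V : nmodType) (T : finType) (t : T) (v : V) :
  \sum_i (if t == i then v else 0) = v.
Proof.
rewrite (sum1 (i:=t)); first by rewrite eqxx.
by move=> k; rewrite eq_sym => /negbTE ->.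
Qed.

Lemma main_eq X : \sum_k tensmap (EA k) (EB k) X =
  \sum_iA \sum_iB \sum_oA \sum_oB pr iA iB oA oB *: tensmap (Ainst iA oA) (Binst iB oB) X.
Proof.
symmetry; rewrite swap4.
have inner oA oB : \sum_iA \sum_iB pr iA iB oA oB *: tensmap (Ainst iA oA) (Binst iB oB) X =
  m1 oA oB *: tensmap (Ainst (t1 oA oB).1 oA) (Binst (t1 oA oB).2 oB) X +
  (1 - m1 oA oB) *: tensmap (Ainst (inr false) oA) (Binst (inr tt) oB) X.
  under eq_bigr => iA _ do (under eq_bigr => iB _ do rewrite /pr scalerDl; rewrite big_split).
  by rewrite big_split /= !sum_pair_ind.
under eq_bigr => oA _ do under eq_bigr => oB _ do rewrite inner.
have g oA oB :
  m1 oA oB *: tensmap (Ainst (t1 oA oB).1 oA) (Binst (t1 oA oB).2 oB) X +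
  (1 - m1 oA oB) *: tensmap (Ainst (inr false) oA) (Binst (inr tt) oB) X =
  match oA, oB with
  | inl kr, inl k' => if kr.1 == k' then wt kr.1 *: tensmap (FA kr.1) (FB kr.1) X else 0
  | _, _ => 0 end.
  case: oA => [kr|[]]; case: oB => [k'|[]] /=.
  - case: eqP => [e|ne] /=.
      by rewrite !eqxx /ZA tensmap_0l scaler0 addr0 -e.
    by rewrite /ZA !tensmap_0l !scaler0 addr0.
  - by rewrite /ZA !tensmap_0l !scaler0 addr0.
  - by rewrite /ZA !tensmap_0l !scaler0 addr0.
  - by rewrite /ZA !tensmap_0l !scaler0 addr0.
  - by rewrite /ZA tensmap_0l scaler0 subrr scale0r addr0.
  - by rewrite /ZA tensmap_0l scaler0 subrr scale0r addr0.
under eq_bigr => oA _ do under eq_bigr => oB _ do rewrite g.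
rewrite big_sumType /= [X in _ + X]big1 ?addr0; last first.
  by move=> bb _; case: bb; apply: big1.
under eq_bigr => kr _ do rewrite big_sumType /= [X in _ + X]big1 ?addr0 // sum_ind'.
rewrite -(pair_bigA _ (fun k (r : 'I_R) => wt k *: tensmap (FA k) (FB k) X)).
apply: eq_bigr => k _; rewrite sumr_const card_ord.
rewrite /FA /FB tensmap_Zl tensmap_Zr !scalerA scalerMnl.
have m0 : muA k != 0 by rewrite gt_eqF ?muA_gt0.
have m0' : muB k != 0 by rewrite gt_eqF ?muB_gt0.
have -> : (wt k * ((muA k)^-1 * (muB k)^-1)) *+ R = 1.
  by rewrite -mulr_natr /wt; field; rewrite m0 m0' R_neq0.
by rewrite scale1r.
Qed.

Lemma sep_locc_main : LOCCstar M.
Proof.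
apply: (locc_fin (A:=Ainst) (B:=Binst) (p:=pr)) => //.
- exact: CP_Ainst.
- exact: TP_Ainst.
- exact: CP_Binst.
- exact: TP_Binst.
- move=> iA iB oA oB; rewrite /pr; have /andP [h0 h1] := m1_range oA oB.
  by apply: addr_ge0; case: ifP => _ //; rewrite subr_ge0.
- move=> oA oB; rewrite /pr.
  under eq_bigr do rewrite big_split.
  by rewrite big_split /= !sum_pair_ind1 addrC subrK.
- by move=> X; rewrite hMX main_eq.
Qed.

End Constr.

End Main.

Lemma trivial_locc (C : numClosedFieldType) x y a b (M : 'M[C]_(x * y) -> 'M[C]_(a * b)) :
  (a * b = 0)%N -> CPTP M -> LOCCstar M.
Proof.
move=> hab hM; split => //.
exists 0%N, 0%N, 0%N, 0%N.
exists (fun _ _ _ => 0), (fun _ _ _ => 0), (fun _ _ _ _ => 0).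
split; first by split; case.
split; first by split; case.
split; first by case.
split; first by case.
move=> X; rewrite big_ord0; apply/matrixP => i.
by have := ltn_ord i; rewrite {2}hab.
Qed.

Unset Implicit Arguments.
Set Strict Implicit.

Theorem mainTheorem13 (C : numClosedFieldType) (x y a b : nat)
  (M : 'M[C]_(x * y) -> 'M[C]_(a * b)) :
  LOCCstar M <-> SEP M.
Proof.
split; first exact: locc_sep.
move=> hS; have hM := hS.1.
case: a M hS hM => [|a] M hS hM; first exact: trivial_locc.
case: b M hS hM => [|b] M hS hM; first by apply: trivial_locc => //; rewrite muln0.
case: hS => hM' [L [EA [EB [hA [hB hMX]]]]].
exact: (sep_locc_main hM hA hB hMX).
Qed.
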